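(* Let $0<\alpha<1$, $\lambda\ge 0$, $v>0$, $D>0$, $T>0$, $L>0$, integers $n\ge 1$, $K\ge 2$, grading exponent $r\ge 1$, and let $h=L/K$, $x_i=ih$, $t_j=(j/n)^rT$, $\tau_j=t_{j+1}-t_j$. Consider the implicit scheme: for $i=1,\ldots,K-1$, $l=1,\ldots,n$, $$\frac{1}{\Gamma(2-\alpha)}\sum_{j=0}^{l-1} \tau_{j}^{-\alpha}a_{j,l}\left(Y_i^{j+1}-Y_i^{j}\right)=-v \frac{Y_{i+1}^l-Y_{i-1}^l}{2h}+D\frac{Y_{i+1}^l-2Y_{i}^l+Y_{i-1}^l}{h^2}+e^{\lambda t_l}f_i^l,$$ with $Y_0^l=Y_K^l=0$ for $l=1,\ldots,n$ and initial values $Y_i^0=g(x_i)$, $i=1,\ldots,K-1$, where $$a_{j,k}=\left( \frac{k^r-j^r}{(j+1)^r-j^r}\right)^{1-\alpha}-\left(\frac{k^r-(j+1)^r}{(j+1)^r-j^r}\right)^{1-\alpha}.$$ If $h<\frac{2D}{v}$, then the scheme is stable in the following sense: if $(Y_i^l)$ and $(\tilde Y_i^l)$ are the solutions of the scheme corresponding to initial data $g$ and $\tilde g$ respectively (with the same $f_i^l$), and $\epsilon_i^l=Y_i^l-\tilde Y_i^l$, $\|E^l\|_\infty=\max_{1\le i\le K-1}|\epsilon_i^l|$, then $\|E^l\|_\infty\le \|E^0\|_\infty$ for all $l=1,\ldots,n$.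
   Context: The scheme approximates the solution $y$ of $D_t^{\alpha}y=-v\,\partial_x y+D\,\partial_x^2 y+e^{\lambda t}f(x,t)$ on $(0,L)\times(0,T]$, $y(x,0)=g(x)$, $y(0,t)=y(L,t)=0$, where $D_t^\alpha$ is the Caputo derivative $D_t^\alpha y(t)=\frac{1}{\Gamma(1-\alpha)}\int_0^t (t-s)^{-\alpha}y'(s)\,ds$; here $f_i^l=f(x_i,t_l)$ and $f,g$ are continuous. The function $u=e^{-\lambda t}y$ then solves the tempered problem $\mathbb{D}_t^{\alpha,\lambda}u=-v\partial_xu+D\partial_x^2u+f$ with tempered Caputo derivative $\mathbb{D}_t^{\alpha,\lambda}u=e^{-\lambda t}D_t^\alpha(e^{\lambda t}u)$. *)

(* Defs.v *)
From Stdlib Require Import Reals Lra Lia List.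
From Coquelicot Require Import Coquelicot.
Open Scope R_scope.

(* Real power x^y for x >= 0 with the convention 0^y = 0 (used for y > 0). *)
Definition powr (x y : R) : R := if Rle_dec x 0 then 0 else Rpower x y.

Definition Gamma (s : R) : R :=
  RInt_gen (fun t => Rpower t (s - 1) * exp (- t)) (at_right 0) (Rbar_locally p_infty).

(* finite sum over j = m, ..., m+k-1 *)
Definition sumR (m k : nat) (F : nat -> R) : R :=
  fold_right Rplus 0 (map F (seq m k)).

Definition tgrid (T r : R) (n j : nat) : R := powr (INR j / INR n) r * T.
Definition tau (T r : R) (n j : nat) : R := tgrid T r n (S j) - tgrid T r n j.

Definition acoef (alpha r : R) (j k : nat) : R :=
  let d := powr (INR (S j)) r - powr (INR j) r in
  powr ((powr (INR k) r - powr (INR j) r) / d) (1 - alpha)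
  - powr ((powr (INR k) r - powr (INR (S j)) r) / d) (1 - alpha).

(* Y : time index l -> space index i -> value Y_i^l.
   The scheme with data f (f_i^l = f x_i t_l) and initial datum g. *)
Definition is_scheme_solution (alpha lambda v D T L r : R) (n K : nat)
  (f : R -> R -> R) (g : R -> R) (Y : nat -> nat -> R) : Prop :=
  let h := L / INR K in
  (forall l, (1 <= l <= n)%nat -> Y l 0%nat = 0 /\ Y l K = 0) /\
  (forall i, (1 <= i <= K - 1)%nat -> Y 0%nat i = g (INR i * h)) /\
  (forall l i, (1 <= l <= n)%nat -> (1 <= i <= K - 1)%nat ->
     / Gamma (2 - alpha) *
       sumR 0 l (fun j => Rpower (tau T r n j) (- alpha) * acoef alpha r j l
                            * (Y (S j) i - Y j i))
     = - v * (Y l (S i) - Y l (i - 1)%nat) / (2 * h)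
       + D * (Y l (S i) - 2 * Y l i + Y l (i - 1)%nat) / (h ^ 2)
       + exp (lambda * tgrid T r n l) * f (INR i * h) (tgrid T r n l)).

Definition supnorm (K : nat) (E : nat -> R) : R :=
  fold_right Rmax 0 (map (fun i => Rabs (E i)) (seq 1 (K - 1))).

(* Main.v *)
Require Import Defs.
From Stdlib Require Import Reals Lra Lia List Classical.
From Coquelicot Require Import Coquelicot.
Open Scope R_scope.

Lemma powr_pos_eq x e : 0 < x -> powr x e = Rpower x e.
Proof. intro H. unfold powr. destruct (Rle_dec x 0); [lra|auto]. Qed.

Lemma powr_0 e : powr 0 e = 0.
Proof. unfold powr. destruct (Rle_dec 0 0); [auto|lra]. Qed.

Lemma Rpower_pos x e : 0 < Rpower x e.
Proof. unfold Rpower. apply exp_pos. Qed.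

Lemma Rpower_inv d e : 0 < d -> Rpower (/ d) e = / Rpower d e.
Proof.
  intro H. unfold Rpower. rewrite ln_Rinv by auto.
  rewrite <- exp_Ropp. f_equal. ring.
Qed.

Lemma powr_div x d e : 0 <= x -> 0 < d -> powr (x / d) e = powr x e / Rpower d e.
Proof.
  intros Hx Hd. destruct Hx as [Hx|Hx].
  - rewrite !powr_pos_eq; auto. unfold Rdiv. rewrite <- Rpower_mult_distr; auto.
    rewrite Rpower_inv; auto. apply Rinv_0_lt_compat; auto.
    apply Rmult_lt_0_compat; auto. apply Rinv_0_lt_compat; auto.
  - subst. unfold Rdiv. rewrite Rmult_0_l, powr_0. ring.
Qed.

Lemma Rpower_m1 d : 0 < d -> Rpower d (Ropp 1) = / d.
Proof. intro H. rewrite Rpower_Ropp, Rpower_1; auto. Qed.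

Lemma Rpower_anti c y e : e < 0 -> 0 < y < c -> Rpower c e < Rpower y e.
Proof.
  intros He Hy. unfold Rpower. apply exp_increasing.
  assert (ln y < ln c) by (apply ln_increasing; lra). nra.
Qed.

Section Conc.
Variable be : R.
Hypothesis Hbe : 0 < be < 1.

Lemma psi_incr x y : 0 <= x < y -> powr x be < powr y be.
Proof.
  intros H. rewrite (powr_pos_eq y) by lra. destruct (proj1 H) as [Hx|Hx].
  rewrite powr_pos_eq by lra. apply Rlt_Rpower_l; lra.
  subst. rewrite powr_0. apply Rpower_pos.
Qed.

Lemma mvt_psi a b : 0 < a < b -> exists c, a < c < b /\
   powr b be - powr a be = be * Rpower c (be - 1) * (b - a).
Proof.
  intros H. rewrite !powr_pos_eq by lra.
  destruct (MVT_cor2 (fun x => Rpower x be) (fun x => be * Rpower x (be - 1)) a b) as [c [Hc1 Hc2]].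
  lra. intros c Hc. apply derivable_pt_lim_power. lra.
  exists c. split; auto.
Qed.

Lemma slope_mono x y z : 0 <= x < y -> y < z ->
  (powr z be - powr y be) / (z - y) <= (powr y be - powr x be) / (y - x).
Proof.
  intros Hxy Hyz.
  destruct (mvt_psi y z) as [c [Hc Heq]]. lra.
  rewrite Heq.
  replace (be * Rpower c (be - 1) * (z - y) / (z - y)) with (be * Rpower c (be - 1)) by (field; lra).
  assert (H1 : Rpower c (be - 1) < Rpower y (be - 1)) by (apply Rpower_anti; lra).
  assert (H2 : be * Rpower c (be - 1) <= be * Rpower y (be - 1)) by nra.
  destruct (proj1 Hxy) as [Hx|Hx].
  - destruct (mvt_psi x y) as [d [Hd Heq2]]. lra.
    rewrite Heq2.
    replace (be * Rpower d (be - 1) * (y - x) / (y - x)) with (be * Rpower d (be - 1)) by (field; lra).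
    assert (Rpower y (be - 1) < Rpower d (be - 1)) by (apply Rpower_anti; lra).
    nra.
  - subst x. rewrite powr_0, Rminus_0_r, Rminus_0_r.
    rewrite powr_pos_eq by lra.
    replace (Rpower y be / y) with (Rpower y (be - 1)).
    2: { replace (be - 1) with (be + Ropp 1) by ring. rewrite Rpower_plus, Rpower_m1 by lra. reflexivity. }
    pose proof (Rpower_pos y (be - 1)). nra.
Qed.
End Conc.

Section Grid.
Variables (alpha T r : R) (n : nat).
Hypotheses (Ha : 0 < alpha < 1) (HT : 0 < T) (Hr : 1 <= r) (Hn : (1 <= n)%nat).

Let P k := powr (INR k) r.
Let C := T / Rpower (INR n) r.

Lemma P0 : P 0 = 0.
Proof. unfold P. simpl INR. apply powr_0. Qed.

Lemma INR_pos k : (0 < k)%nat -> 0 < INR k.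
Proof. intro H. apply lt_0_INR. lia. Qed.

Lemma P_lt j k : (j < k)%nat -> P j < P k.
Proof.
  intro H. unfold P. rewrite (powr_pos_eq (INR k)) by (apply INR_pos; lia).
  destruct j. simpl INR. rewrite powr_0. apply Rpower_pos.
  rewrite powr_pos_eq by (apply INR_pos; lia). apply Rlt_Rpower_l. lra.
  split. apply INR_pos; lia. apply lt_INR; lia.
Qed.

Lemma P_le j k : (j <= k)%nat -> P j <= P k.
Proof. intro H. destruct (Nat.eq_dec j k). subst; lra. left; apply P_lt; lia. Qed.

Lemma C_pos : 0 < C.
Proof. unfold C. apply Rdiv_lt_0_compat; auto. apply Rpower_pos. Qed.

Lemma tgrid_eq j : tgrid T r n j = C * P j.
Proof.
  unfold tgrid, C, P. destruct j.
  - simpl INR. unfold Rdiv at 1. rewrite Rmult_0_l, !powr_0. ring.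
  - assert (0 < INR (S j)) by (apply INR_pos; lia).
    assert (0 < INR n) by (apply INR_pos; lia).
    rewrite powr_div by lra. rewrite powr_pos_eq by lra. field.
    apply Rgt_not_eq, Rpower_pos.
Qed.

Lemma tau_eq j : tau T r n j = C * (P (S j) - P j).
Proof. unfold tau. rewrite !tgrid_eq. ring. Qed.

Lemma bb_eq j l : (j < l)%nat ->
  Rpower (tau T r n j) (- alpha) * acoef alpha r j l =
  Rpower C (- alpha) * ((powr (P l - P j) (1 - alpha) - powr (P l - P (S j)) (1 - alpha)) / (P (S j) - P j)).
Proof.
  intro Hjl.
  assert (Hd : 0 < P (S j) - P j) by (pose proof (P_lt j (S j) ltac:(lia)); lra).
  pose proof C_pos.
  rewrite tau_eq. unfold acoef. fold (P j) (P (S j)) (P l).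
  rewrite <- Rpower_mult_distr by auto.
  rewrite !powr_div; auto.
  2: { pose proof (P_le (S j) l ltac:(lia)); lra. }
  2: { pose proof (P_le j l ltac:(lia)); lra. }
  replace (- alpha) with ((1 - alpha) + Ropp 1) at 2 by ring.
  rewrite Rpower_plus, Rpower_m1 by auto.
  assert (Rpower (P (S j) - P j) (1 - alpha) <> 0) by (apply Rgt_not_eq, Rpower_pos).
  field. split; lra.
Qed.

Lemma bb_pos j l : (j < l)%nat -> 0 < Rpower (tau T r n j) (- alpha) * acoef alpha r j l.
Proof.
  intro H. rewrite bb_eq by auto. apply Rmult_lt_0_compat. apply Rpower_pos.
  assert (Hd : 0 < P (S j) - P j) by (pose proof (P_lt j (S j) ltac:(lia)); lra).
  apply Rdiv_lt_0_compat; auto.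
  assert (powr (P l - P (S j)) (1 - alpha) < powr (P l - P j) (1 - alpha)).
  { apply psi_incr. lra. pose proof (P_le (S j) l ltac:(lia)). lra. }
  lra.
Qed.

Lemma bb_mono j l : (S j < l)%nat ->
  Rpower (tau T r n j) (- alpha) * acoef alpha r j l <=
  Rpower (tau T r n (S j)) (- alpha) * acoef alpha r (S j) l.
Proof.
  intro H. rewrite !bb_eq by lia. apply Rmult_le_compat_l. left; apply Rpower_pos.
  pose proof (P_le (S (S j)) l ltac:(lia)).
  pose proof (P_lt j (S j) ltac:(lia)). pose proof (P_lt (S j) (S (S j)) ltac:(lia)).
  pose proof (slope_mono (1 - alpha) ltac:(lra) (P l - P (S (S j))) (P l - P (S j)) (P l - P j)
     ltac:(lra) ltac:(lra)).
  replace (P (S j) - P j) with ((P l - P j) - (P l - P (S j))) by ring.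
  replace (P (S (S j)) - P (S j)) with ((P l - P (S j)) - (P l - P (S (S j)))) by ring.
  auto.
Qed.
End Grid.

Lemma exp_le_exp x y : x <= y -> exp x <= exp y.
Proof. intros [H|H]. left; apply exp_increasing; auto. subst; lra. Qed.

Section G.
Variable be : R.
Hypothesis Hbe : 0 <= be <= 1.
Let fG := fun t => Rpower t be * exp (- t).

Lemma fG_cont t : 0 < t -> continuous fG t.
Proof.
  intro Ht. apply (ex_derive_continuous (K:=R_AbsRing) (V:=R_NormedModule)). unfold fG, Rpower.
  auto_derive. lra.
Qed.

Lemma fG_ex a b : 0 < a -> 0 < b -> ex_RInt fG a b.
Proof.
  intros Ha Hb. apply (ex_RInt_continuous (V:=R_CompleteNormedModule)). intros z Hz. apply fG_cont.
  assert (0 < Rmin a b) by (apply Rmin_glb_lt; lra). lra.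
Qed.

Lemma fG_bound t : 0 < t -> 0 <= fG t <= 2 * exp (- t / 2).
Proof.
  intro Ht. unfold fG, Rpower. split.
  - apply Rmult_le_pos; left; apply exp_pos.
  - assert (H1 : exp (be * ln t) <= 1 + t).
    { destruct (Rle_dec t 1) as [H|H].
      - assert (ln t <= 0). { rewrite <- ln_1. destruct H. left. apply ln_increasing; lra. subst; lra. }
        assert (exp (be * ln t) <= exp 0). { apply exp_le_exp. nra. }
        rewrite exp_0 in H1. lra.
      - assert (0 < ln t). { rewrite <- ln_1. apply ln_increasing; lra. }
        assert (exp (be * ln t) <= exp (ln t)). { apply exp_le_exp. nra. }
        rewrite exp_ln in H1; lra. }
    assert (H2 : 1 + t <= 2 * exp (t / 2)). { pose proof (exp_ineq1_le (t/2)). lra. }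
    assert (H3 : exp (t/2) * exp (- t) = exp (- t / 2)).
    { rewrite <- exp_plus. f_equal. field. }
    pose proof (exp_pos (-t)).
    apply Rle_trans with ((1 + t) * exp (- t)). apply Rmult_le_compat_r; lra.
    apply Rle_trans with (2 * exp (t / 2) * exp (- t)). apply Rmult_le_compat_r; lra.
    rewrite Rmult_assoc, H3. lra.
Qed.

Lemma gG_int a b : RInt (fun t => 2 * exp (- t / 2)) a b = 4 * exp (- a / 2) - 4 * exp (- b / 2).
Proof.
  apply is_RInt_unique.
  replace (4 * exp (- a / 2) - 4 * exp (- b / 2)) with
    (minus ((fun t => -4 * exp (- t / 2)) b) ((fun t => -4 * exp (- t / 2)) a)).
  2: { unfold minus, plus, opp; simpl. ring. }
  apply (is_RInt_derive (V:=R_CompleteNormedModule) (fun t => -4 * exp (- t / 2))).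
  - intros x _. auto_derive. auto. unfold Rdiv. simpl. unfold Rdiv. lra.
  - intros x _. apply (ex_derive_continuous (K:=R_AbsRing) (V:=R_NormedModule)). auto_derive. auto.
Qed.

Lemma FG_bound a b : 0 < a <= b -> RInt fG a b <= 4.
Proof.
  intros Hab.
  apply Rle_trans with (RInt (fun t => 2 * exp (- t / 2)) a b).
  - apply RInt_le. lra. apply fG_ex; lra.
    apply (ex_RInt_continuous (V:=R_CompleteNormedModule)). intros z _. apply (ex_derive_continuous (K:=R_AbsRing) (V:=R_NormedModule)). auto_derive. auto.
    intros x Hx. apply fG_bound. lra.
  - rewrite gG_int. pose proof (exp_pos (-b/2)).
    assert (exp (-a/2) <= exp 0). apply exp_le_exp. lra. rewrite exp_0 in H0. lra.
Qed.

Lemma plusR (x y : R) : plus x y = x + y.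
Proof. reflexivity. Qed.

Lemma FG_mono a a0 b0 b : 0 < a <= a0 -> a0 <= b0 <= b -> RInt fG a0 b0 <= RInt fG a b.
Proof.
  intros H1 H2.
  rewrite <- (RInt_Chasles fG a a0 b) by (apply fG_ex; lra).
  rewrite <- (RInt_Chasles fG a0 b0 b) by (apply fG_ex; lra).
  rewrite !plusR.
  assert (0 <= RInt fG a a0). { apply RInt_ge_0. lra. apply fG_ex; lra. intros; apply fG_bound; lra. }
  assert (0 <= RInt fG b0 b). { apply RInt_ge_0. lra. apply fG_ex; lra. intros; apply fG_bound; lra. }
  unfold plus in *; simpl in *. lra.
Qed.

Lemma FG_12 : exp (-2) <= RInt fG 1 2.
Proof.
  replace (exp (-2)) with (RInt (fun _ => exp (-2)) 1 2).
  2: { rewrite RInt_const. unfold scal; simpl. unfold mult; simpl. ring. }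
  apply RInt_le. lra. apply ex_RInt_const. apply fG_ex; lra.
  intros x Hx. unfold fG, Rpower.
  assert (0 <= ln x). { rewrite <- ln_1. left. apply ln_increasing; lra. }
  assert (exp 0 <= exp (be * ln x)). { apply exp_le_exp. nra. }
  rewrite exp_0 in H0.
  assert (exp (-2) <= exp (-x)). { apply exp_le_exp. lra. }
  pose proof (exp_pos (-2)). nra.
Qed.

Lemma Gamma_gen_pos : exists l, is_RInt_gen fG (at_right 0) (Rbar_locally p_infty) l /\ 0 < l.
Proof.
  set (E := fun x => exists a b, 0 < a <= b /\ x = RInt fG a b).
  destruct (completeness E) as [l [Hub Hlub]].
  - exists 4. intros x [a [b [Hab ->]]]. apply FG_bound; auto.
  - exists (RInt fG 1 2). exists 1, 2. split; [lra|auto].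
  - exists l. split.
    2: { assert (RInt fG 1 2 <= l). apply Hub. exists 1, 2; split; [lra|auto].
         pose proof FG_12. pose proof (exp_pos (-2)). lra. }
    intros P [eps Heps].
    destruct (classic (exists x, E x /\ l - eps < x)) as [[x [[a0 [b0 [Hab0 ->]]] Hx]]|Hn].
    2: { exfalso. assert (l <= l - eps).
         { apply Hlub. intros x Ex. destruct (Rle_dec x (l - eps)); auto.
           exfalso. apply Hn. exists x. split; auto. lra. }
         destruct eps; simpl in *; lra. }
    apply (Filter_prod _ _ _ (fun a => 0 < a < a0) (fun b => b0 < b)).
    + assert (Ha0 : 0 < a0) by lra. exists (mkposreal a0 Ha0). intros y Hy Hy0.
      simpl in Hy. unfold ball in Hy; simpl in Hy. unfold AbsRing_ball, abs, minus, plus, opp in Hy; simpl in Hy.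
      rewrite Ropp_0, Rplus_0_r in Hy. apply Rabs_def2 in Hy. lra.
    + exists b0. auto.
    + intros a b Ha Hb. simpl. exists (RInt fG a b). split.
      * apply (RInt_correct (V:=R_CompleteNormedModule)), fG_ex; lra.
      * apply Heps.
        assert (RInt fG a0 b0 <= RInt fG a b) by (apply FG_mono; lra).
        assert (RInt fG a b <= l) by (apply Hub; exists a, b; split; [lra|auto]).
        unfold ball; simpl. unfold AbsRing_ball, abs, minus, plus, opp; simpl.
        apply Rabs_def1; lra.
Qed.
End G.

Lemma Gamma_pos alpha : 0 < alpha < 1 -> 0 < Gamma (2 - alpha).
Proof.
  intro Ha. destruct (Gamma_gen_pos (2 - alpha - 1) ltac:(lra)) as [l [Hl Hpos]].
  unfold Gamma. rewrite (is_RInt_gen_unique _ l Hl). auto.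
Qed.

Lemma fr_plus c l : fold_right Rplus c l = fold_right Rplus 0 l + c.
Proof. induction l; simpl. ring. rewrite IHl. ring. Qed.

Lemma sumR_S m F : sumR 0 (S m) F = sumR 0 m F + F m.
Proof.
  unfold sumR. rewrite seq_S, map_app, fold_right_app. simpl.
  rewrite fr_plus. ring.
Qed.

Lemma sumR_0 F : sumR 0 0 F = 0.
Proof. reflexivity. Qed.

Lemma sumR_lin m (b x y : nat -> R) :
  sumR 0 m (fun j => b j * ((x (S j) - y (S j)) - (x j - y j))) =
  sumR 0 m (fun j => b j * (x (S j) - x j)) - sumR 0 m (fun j => b j * (y (S j) - y j)).
Proof.
  induction m. rewrite !sumR_0; ring.
  rewrite !sumR_S, IHm. ring.
Qed.

Lemma sum_lower (b x : nat -> R) N k :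
  (forall j, (j <= k)%nat -> 0 <= b j) ->
  (forall j, (j < k)%nat -> b j <= b (S j)) ->
  (forall j, (j <= k)%nat -> x j <= N) ->
  b k * (x (S k) - N) <= sumR 0 (S k) (fun j => b j * (x (S j) - x j)).
Proof.
  induction k; intros Hb Hm Hx.
  - rewrite sumR_S, sumR_0. pose proof (Hb 0%nat (le_n _)). pose proof (Hx 0%nat (le_n _)). nra.
  - rewrite sumR_S.
    assert (IH : b k * (x (S k) - N) <= sumR 0 (S k) (fun j => b j * (x (S j) - x j))).
    { apply IHk; intros; [apply Hb|apply Hm|apply Hx]; lia. }
    pose proof (Hm k (Nat.lt_succ_diag_r _)). pose proof (Hx (S k) (le_n _)).
    pose proof (Hb (S k) (le_n _)).
    assert (0 <= (b (S k) - b k) * (N - x (S k))) by nra.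
    nra.
Qed.

Lemma sum_upper (b x : nat -> R) N k :
  (forall j, (j <= k)%nat -> 0 <= b j) ->
  (forall j, (j < k)%nat -> b j <= b (S j)) ->
  (forall j, (j <= k)%nat -> - N <= x j) ->
  sumR 0 (S k) (fun j => b j * (x (S j) - x j)) <= b k * (x (S k) + N).
Proof.
  induction k; intros Hb Hm Hx.
  - rewrite sumR_S, sumR_0. pose proof (Hb 0%nat (le_n _)). pose proof (Hx 0%nat (le_n _)). nra.
  - rewrite sumR_S.
    assert (IH : sumR 0 (S k) (fun j => b j * (x (S j) - x j)) <= b k * (x (S k) + N)).
    { apply IHk; intros; [apply Hb|apply Hm|apply Hx]; lia. }
    pose proof (Hm k (Nat.lt_succ_diag_r _)). pose proof (Hx (S k) (le_n _)).
    pose proof (Hb (S k) (le_n _)).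
    assert (0 <= (b (S k) - b k) * (x (S k) + N)) by nra.
    nra.
Qed.

Lemma fr_ge0 l : 0 <= fold_right Rmax 0 l.
Proof. induction l; simpl. lra. eapply Rle_trans; [exact IHl | apply Rmax_r]. Qed.

Lemma fr_in x l : In x l -> x <= fold_right Rmax 0 l.
Proof.
  induction l; simpl; intros H. contradiction.
  destruct H as [<-|H]. apply Rmax_l. eapply Rle_trans; [apply IHl; auto | apply Rmax_r].
Qed.

Lemma fr_le N l : 0 <= N -> (forall x, In x l -> x <= N) -> fold_right Rmax 0 l <= N.
Proof.
  induction l; simpl; intros H0 H. auto.
  apply Rmax_lub. apply H; auto. apply IHl; auto.
Qed.

Lemma fr_att l : fold_right Rmax 0 l = 0 \/ In (fold_right Rmax 0 l) l.
Proof.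
  induction l; simpl. auto.
  destruct (Rle_dec a (fold_right Rmax 0 l)).
  rewrite Rmax_right by auto. destruct IHl; intuition.
  rewrite Rmax_left by lra. intuition.
Qed.

Lemma supnorm_ge0 K E : 0 <= supnorm K E.
Proof. apply fr_ge0. Qed.

Lemma supnorm_elem K E i : (1 <= i <= K - 1)%nat -> Rabs (E i) <= supnorm K E.
Proof.
  intro H. apply fr_in. apply (in_map (fun i => Rabs (E i))). apply in_seq. lia.
Qed.

Lemma supnorm_le K E N : 0 <= N -> (forall i, (1 <= i <= K - 1)%nat -> Rabs (E i) <= N) ->
  supnorm K E <= N.
Proof.
  intros H0 H. apply fr_le; auto. intros x Hx. apply in_map_iff in Hx.
  destruct Hx as [i [<- Hi]]. apply in_seq in Hi. apply H. lia.
Qed.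

Lemma supnorm_att K E : supnorm K E = 0 \/
  exists i, (1 <= i <= K - 1)%nat /\ supnorm K E = Rabs (E i).
Proof.
  destruct (fr_att (map (fun i => Rabs (E i)) (seq 1 (K - 1)))) as [H|H]. left; auto.
  right. unfold supnorm. apply in_map_iff in H. destruct H as [i [Hi Hs]].
  apply in_seq in Hs. exists i. split. lia. auto.
Qed.
Lemma abs_bnd x a : Rabs x <= a -> - a <= x <= a.
Proof. unfold Rabs. destruct (Rcase_abs x); intros; lra. Qed.

Theorem mainTheorem1 (alpha lambda v D T L r : R) (n K : nat)
  (f : R -> R -> R) (g gt : R -> R) (Y Yt : nat -> nat -> R) :
  0 < alpha < 1 -> 0 <= lambda -> 0 < v -> 0 < D -> 0 < T -> 0 < L ->
  (1 <= n)%nat -> (2 <= K)%nat -> 1 <= r ->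
  (forall p : R * R, 0 <= fst p <= L -> 0 <= snd p <= T ->
     filterlim (fun q : R * R => f (fst q) (snd q))
       (within (fun q : R * R => 0 <= fst q <= L /\ 0 <= snd q <= T) (locally p))
       (locally (f (fst p) (snd p)))) ->
  (forall x, 0 <= x <= L ->
     filterlim g (within (fun y => 0 <= y <= L) (locally x)) (locally (g x))) ->
  (forall x, 0 <= x <= L ->
     filterlim gt (within (fun y => 0 <= y <= L) (locally x)) (locally (gt x))) ->
  L / INR K < 2 * D / v ->
  is_scheme_solution alpha lambda v D T L r n K f g Y ->
  is_scheme_solution alpha lambda v D T L r n K f gt Yt ->
  forall l, (1 <= l <= n)%nat ->
    supnorm K (fun i => Y l i - Yt l i) <= supnorm K (fun i => Y 0%nat i - Yt 0%nat i).
Proof.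
  intros Ha Hla Hv HD HT HL Hn HK Hr _ _ _ Hh HS1 HS2.
  destruct HS1 as [Hb1 [Hi1 He1]]. destruct HS2 as [Hb2 [Hi2 He2]].
  cbv zeta in He1, He2.
  set (h := L / INR K) in *.
  assert (Hh0 : 0 < h).
  { unfold h; apply Rdiv_lt_0_compat; auto; apply lt_0_INR; lia. }
  assert (Hvh : v * h < 2 * D).
  { apply Rmult_lt_compat_l with (r := v) in Hh; auto.
    replace (v * (2 * D / v)) with (2 * D) in Hh by (field; lra). lra. }
  pose proof (Gamma_pos alpha Ha) as HG.
  set (N0 := supnorm K (fun i => Y 0%nat i - Yt 0%nat i)).
  assert (HN0 : 0 <= N0) by apply supnorm_ge0.
  assert (Main : forall m, (m <= n)%nat -> forall j, (j <= m)%nat ->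
     forall i, (1 <= i <= K - 1)%nat -> Rabs (Y j i - Yt j i) <= N0).
  { induction m; intros Hm j Hj i Hi.
    { replace j with 0%nat by lia. apply (supnorm_elem K (fun i => Y 0%nat i - Yt 0%nat i)); auto. }
    destruct (Nat.eq_dec j (S m)) as [->|Hne].
    2: { apply IHm; lia. }
    assert (IH : forall j, (j <= m)%nat -> forall i, (1 <= i <= K - 1)%nat ->
              Rabs (Y j i - Yt j i) <= N0) by (intros; apply IHm; auto; lia).
    set (E := fun i => Y (S m) i - Yt (S m) i).
    assert (HM : supnorm K E <= N0).
    { destruct (supnorm_att K E) as [H0|[i0 [Hi0 HM]]].
      { rewrite H0; auto. }
      set (M := supnorm K E) in *.
      assert (HEi : forall i, (1 <= i <= K - 1)%nat -> Rabs (E i) <= M)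
        by (intros; apply supnorm_elem; auto).
      assert (Hn1 : Rabs (E (S i0)) <= M).
      { destruct (Nat.eq_dec (S i0) K) as [Heq|Hne'].
        { unfold E. rewrite Heq. destruct (Hb1 (S m) ltac:(lia)) as [_ ->].
          destruct (Hb2 (S m) ltac:(lia)) as [_ ->]. rewrite Rminus_0_r, Rabs_R0. apply supnorm_ge0. }
        apply HEi; lia. }
      assert (Hn0 : Rabs (E (i0 - 1)%nat) <= M).
      { destruct (Nat.eq_dec i0 1) as [Heq|Hne'].
        { unfold E. rewrite Heq. simpl (1 - 1)%nat. destruct (Hb1 (S m) ltac:(lia)) as [-> _].
          destruct (Hb2 (S m) ltac:(lia)) as [-> _]. rewrite Rminus_0_r, Rabs_R0. apply supnorm_ge0. }
        apply HEi; lia. }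
      set (bb := fun j => Rpower (tau T r n j) (- alpha) * acoef alpha r j (S m)).
      assert (Hbpos : forall j, (j <= m)%nat -> 0 <= bb j).
      { intros. left. unfold bb. apply bb_pos; auto. lia. }
      assert (Hbmono : forall j, (j < m)%nat -> bb j <= bb (S j)).
      { intros. unfold bb. apply bb_mono; auto. lia. }
      assert (Hbm : 0 < bb m).
      { unfold bb. apply bb_pos; auto. }
      set (x := fun j => Y j i0 - Yt j i0).
      assert (Heq : / Gamma (2 - alpha) * sumR 0 (S m) (fun j => bb j * (x (S j) - x j)) =
          ((2 * D - v * h) * E (S i0) + (2 * D + v * h) * E (i0 - 1)%nat - 4 * D * E i0) / (2 * h ^ 2)).
      { pose proof (He1 (S m) i0 ltac:(lia) Hi0) as E1.
        pose proof (He2 (S m) i0 ltac:(lia) Hi0) as E2.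
        assert (Hl : sumR 0 (S m) (fun j => bb j * (x (S j) - x j)) =
           sumR 0 (S m) (fun j => bb j * (Y (S j) i0 - Y j i0)) -
           sumR 0 (S m) (fun j => bb j * (Yt (S j) i0 - Yt j i0)))
          by exact (sumR_lin (S m) bb (fun j => Y j i0) (fun j => Yt j i0)).
        rewrite Hl, Rmult_minus_distr_l. unfold bb. cbv beta.
        rewrite E1, E2. unfold E. field. lra. }
      assert (HG' : 0 < / Gamma (2 - alpha)) by (apply Rinv_0_lt_compat; auto).
      apply abs_bnd in Hn1. apply abs_bnd in Hn0.
      assert (Hx : forall j, (j <= m)%nat -> - N0 <= x j <= N0).
      { intros j' Hj'. apply abs_bnd. unfold x. apply IH; auto. }
      assert (H2h : 0 < 2 * h ^ 2) by nra.
      assert (Hinv : 0 < / (2 * h ^ 2)) by (apply Rinv_0_lt_compat; auto).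
      assert (Hc : 0 < / Gamma (2 - alpha) * bb m) by (apply Rmult_lt_0_compat; auto).
      destruct (Rle_dec 0 (E i0)) as [Hpos|Hneg].
      { rewrite Rabs_right in HM by lra.
        pose proof (sum_lower bb x N0 m Hbpos Hbmono (fun j Hj => proj2 (Hx j Hj))) as Hlow.
        assert (Hnum : (2 * D - v * h) * E (S i0) + (2 * D + v * h) * E (i0 - 1)%nat - 4 * D * E i0 <= 0).
        { assert (0 <= (2 * D - v * h) * (E i0 - E (S i0))) by (apply Rmult_le_pos; lra).
          assert (0 <= (2 * D + v * h) * (E i0 - E (i0 - 1)%nat)) by (apply Rmult_le_pos; nra).
          nra. }
        assert (Hr0 : ((2 * D - v * h) * E (S i0) + (2 * D + v * h) * E (i0 - 1)%nat - 4 * D * E i0) / (2 * h ^ 2) <= 0).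
        { unfold Rdiv. nra. }
        assert (H3 : / Gamma (2 - alpha) * (bb m * (x (S m) - N0)) <=
                     / Gamma (2 - alpha) * sumR 0 (S m) (fun j => bb j * (x (S j) - x j)))
          by (apply Rmult_le_compat_l; lra).
        change (x (S m)) with (E i0) in H3.
        destruct (Rle_dec (E i0) N0) as [Hok|Hko]. lra.
        exfalso. assert (0 < (/ Gamma (2 - alpha) * bb m) * (E i0 - N0)) by (apply Rmult_lt_0_compat; lra).
        nra. }
      { rewrite Rabs_left in HM by lra.
        pose proof (sum_upper bb x N0 m Hbpos Hbmono (fun j Hj => proj1 (Hx j Hj))) as Hup.
        assert (Hnum : 0 <= (2 * D - v * h) * E (S i0) + (2 * D + v * h) * E (i0 - 1)%nat - 4 * D * E i0).
        { assert (0 <= (2 * D - v * h) * (E (S i0) - E i0)) by (apply Rmult_le_pos; lra).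
          assert (0 <= (2 * D + v * h) * (E (i0 - 1)%nat - E i0)) by (apply Rmult_le_pos; nra).
          nra. }
        assert (Hr0 : 0 <= ((2 * D - v * h) * E (S i0) + (2 * D + v * h) * E (i0 - 1)%nat - 4 * D * E i0) / (2 * h ^ 2)).
        { unfold Rdiv. nra. }
        assert (H3 : / Gamma (2 - alpha) * sumR 0 (S m) (fun j => bb j * (x (S j) - x j)) <=
                     / Gamma (2 - alpha) * (bb m * (x (S m) + N0)))
          by (apply Rmult_le_compat_l; lra).
        change (x (S m)) with (E i0) in H3.
        destruct (Rle_dec (- E i0) N0) as [Hok|Hko]. lra.
        exfalso. assert (0 < (/ Gamma (2 - alpha) * bb m) * (- E i0 - N0)) by (apply Rmult_lt_0_compat; lra).
        nra. } }
    apply Rle_trans with (supnorm K E). apply (supnorm_elem K E); auto. auto. }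
  intros l Hl'. apply supnorm_le; auto. intros i Hi. apply (Main l); auto; lia.
Qed.
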